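(* For any weighted undirected graph $G=(V,E,w)$ with $n=|V|\ge2$ and any HC-tree $\mathcal T$ of $G$, $$C_G(\mathcal T)\ \ge\ \frac n3\cdot\min\Big\{w(S,\bar S)\ :\ S\subseteq V,\ \frac n3\le |S|,|\bar S|\le\frac{2n}3\Big\}.$$
   Context: For $G=(V,E,w)$ with nonnegative weights, an HC-tree is a rooted tree whose leaves are in bijection with $V$; its cost is $C_G(\mathcal T)=\sum_{(u,v)\in E}w(u,v)\,|\mathrm{leaves}(\mathcal T[u\vee v])|$ where $u\vee v$ is the lowest common ancestor and $\mathrm{leaves}(\mathcal T[z])$ the leaf set of the subtree rooted at $z$. $\bar S=V\setminus S$, and $w(S,\bar S)$ is the total weight of edges between $S$ and $\bar S$. *)

(* Defs.v *)
From mathcomp Require Import all_boot all_order all_algebra.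
Set Implicit Arguments. Unset Strict Implicit. Unset Printing Implicit Defensive.
Import Order.TTheory GRing.Theory Num.Theory.
Local Open Scope ring_scope.

Inductive hctree (T : Type) : Type :=
  | Leaf of T
  | Node of seq (hctree T).
Arguments Leaf {T}.
Arguments Node {T}.

Fixpoint leaves (T : Type) (t : hctree T) : seq T :=
  match t with
  | Leaf x => [:: x]
  | Node ts => (fix go (s : seq (hctree T)) : seq T :=
                  match s with
                  | [::] => [::]
                  | c :: s' => leaves c ++ go s'
                  end) ts
  end.

(* every internal node has at least one child (so all leaves are labelled) *)
Fixpoint wf_tree (T : Type) (t : hctree T) : bool :=
  match t with
  | Leaf _ => true
  | Node ts => (~~ nilp ts) &&
               (fix go (s : seq (hctree T)) : bool :=
                  match s with
                  | [::] => true
                  | c :: s' => wf_tree c && go s'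
                  end) ts
  end.

Definition is_hctree (V : finType) (t : hctree V) : bool :=
  wf_tree t && perm_eq (leaves t) (enum V).

(* leaves(T[u \/ v]): leaf set of the subtree rooted at the lowest common
   ancestor of the leaves u and v: descend into the (unique, as labels are
   distinct) child containing both, while one exists. *)
Fixpoint lca_leaves (T : eqType) (t : hctree T) (u v : T) : seq T :=
  match t with
  | Leaf x => [:: x]
  | Node ts => (fix go (s : seq (hctree T)) : seq T :=
                  match s with
                  | [::] => leaves t
                  | c :: s' => if (u \in leaves c) && (v \in leaves c)
                               then lca_leaves c u v else go s'
                  end) ts
  end.

(* Cost C_G(T) = sum over edges {u,v} of w(u,v) |leaves(T[u \/ v])|.
   Each unordered edge appears twice among ordered pairs u != v. *)
Definition hc_cost (R : numDomainType) (V : finType) (w : V -> V -> R)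
    (t : hctree V) : R :=
  2^-1 * \sum_(u : V) \sum_(v : V | u != v)
           w u v * (size (lca_leaves t u v))%:R.

Definition cut_weight (R : numDomainType) (V : finType) (w : V -> V -> R)
    (S : {set V}) : R :=
  \sum_(u in S) \sum_(v in ~: S) w u v.

Definition balanced (R : numFieldType) (V : finType) (S : {set V}) : bool :=
  let n : R := #|V|%:R in
  [&& n / 3%:R <= #|S|%:R, #|S|%:R <= 2%:R * n / 3%:R,
      n / 3%:R <= #|~: S|%:R & #|~: S|%:R <= 2%:R * n / 3%:R].

(* Main.v *)
Require Import Defs.
From Stdlib Require List.
From Stdlib Require Import Lia.
From mathcomp Require Import zify.
From mathcomp Require Import all_boot all_order all_algebra.
Import Order.TTheory GRing.Theory Num.Theory.
Set Implicit Arguments. Unset Strict Implicit.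

Section Tree.
Variable V : eqType.

Lemma leaves_node (ts : seq (hctree V)) : leaves (Node ts) = flatten (map (@leaves V) ts).
Proof. by elim: ts => [|c s /= ->]. Qed.

Definition lca_go (u v : V) (d : seq V) (s : seq (hctree V)) :=
  foldr (fun c acc => if (u \in leaves c) && (v \in leaves c) then lca_leaves c u v else acc) d s.

Lemma lca_node ts u v : lca_leaves (Node ts) u v = lca_go u v (leaves (Node ts)) ts.
Proof.
change (lca_leaves (Node ts) u v) with ((fix go (s : seq (hctree V)) : seq V :=
  match s with [::] => leaves (Node ts) | c :: s' => if (u \in leaves c) && (v \in leaves c) then lca_leaves c u v else go s' end) ts).
move: (leaves (Node ts)) => d.
by elim: ts => [|c s /= ->].
Qed.

Fixpoint hct_ind (P : hctree V -> Prop) (HL : forall x, P (Leaf x))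
  (HN : forall ts, (forall c, List.In c ts -> P c) -> P (Node ts)) (t : hctree V) : P t :=
  match t with
  | Leaf x => HL x
  | Node ts => HN ts ((fix go s : forall c, List.In c s -> P c :=
       match s return forall c, List.In c s -> P c with
       | nil => fun c H => False_ind _ H
       | c' :: s' => fun c H => match H with
                     | or_introl e => eq_rect c' P (@hct_ind P HL HN c') c e
                     | or_intror H' => go s' c H' end
       end) ts)
  end.

Lemma mem_flat A a y : List.In a A -> y \in leaves a -> y \in flatten (map (@leaves V) A).
Proof.
elim: A => //= b A IH [<- H|H1 H2]; rewrite mem_cat ?H //.
by rewrite IH ?orbT.
Qed.

Lemma flat_mem A y : y \in flatten (map (@leaves V) A) -> exists2 a, List.In a A & y \in leaves a.
Proof.
elim: A => //= b A IH; rewrite mem_cat => /orP [H|/IH [a Ha Hy]].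
  by exists b; [left|].
by exists a; [right|].
Qed.

Lemma D ts c c' y : uniq (flatten (map (@leaves V) ts)) -> List.In c ts -> List.In c' ts ->
  y \in leaves c -> y \in leaves c' -> c = c'.
Proof.
elim: ts => //= a s IH; rewrite cat_uniq => /and3P [_ Hd Hu] [Hc|Hc] [Hc'|Hc'] Hy Hy'.
- by rewrite -Hc -Hc'.
- subst; case/hasP: Hd; exists y => //; exact: mem_flat Hc' Hy'.
- subst; case/hasP: Hd; exists y => //; exact: mem_flat Hc Hy.
- exact: IH.
Qed.

Lemma uniq_child ts c : uniq (flatten (map (@leaves V) ts)) -> List.In c ts -> uniq (leaves c).
Proof.
elim: ts => //= a s IH; rewrite cat_uniq => /and3P [H1 _ H2] [<-|H] //; exact: IH.
Qed.

Lemma L1 ts u v : (forall c, List.In c ts -> ~~ ((u \in leaves c) && (v \in leaves c))) ->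
  lca_leaves (Node ts) u v = leaves (@Node V ts).
Proof.
rewrite lca_node; move: (leaves (Node ts)) => d.
elim: ts => //= c s IH H.
rewrite (negbTE (H c (or_introl erefl))); apply: IH => c' Hc'; apply: H; by right.
Qed.

Lemma L2 ts c u v : uniq (flatten (map (@leaves V) ts)) -> List.In c ts ->
  u \in leaves c -> v \in leaves c -> @lca_leaves V (Node ts) u v = lca_leaves c u v.
Proof.
rewrite lca_node; move: (leaves (Node ts)) => d.
elim: ts => //= a s IH Hu Hc Hu' Hv'.
case: ifP => [/andP [Ha _]|Hn].
  by rewrite (@D (a::s) _ _ _ Hu (or_introl erefl) Hc Ha Hu') //; case: Hc => [<-|].
case: Hc => [Hc|Hc]; first by subst; rewrite Hu' Hv' in Hn.
by apply: IH => //; move: Hu; rewrite cat_uniq => /and3P [].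
Qed.

End Tree.
Section Key.
Variable V : finType.
Local Notation flat s := (flatten (map (@leaves V) s)).

Lemma In_cat (p q : seq (hctree V)) c : List.In c (p ++ q) -> List.In c p \/ List.In c q.
Proof. elim: p => /= [|a p IH]; [by right | case=> [->|/IH []]; auto]. Qed.

Lemma In_catl (p q : seq (hctree V)) c : List.In c p -> List.In c (p ++ q).
Proof. elim: p => //= a p IH [->|/IH]; auto. Qed.

Lemma In_catr (p q : seq (hctree V)) c : List.In c q -> List.In c (p ++ q).
Proof. elim: p => //= a p IH /IH; auto. Qed.

Lemma hasIn (P : pred (hctree V)) s : has P s -> exists2 c, List.In c s & P c.
Proof.
elim: s => //= a s IH /orP [H|/IH [c Hc HP]]; [exists a; auto | exists c; auto].
Qed.

Lemma hasNIn (P : pred (hctree V)) s : ~~ has P s -> forall c, List.In c s -> ~~ P c.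
Proof.
elim: s => //= a s IH; rewrite negb_or => /andP [Ha Hs] c [<-|Hc] //; exact: IH.
Qed.

Lemma prefix n (s : seq (hctree V)) : (forall c, List.In c s -> 3 * size (leaves c) < n)%N ->
  (n <= 3 * size (flat s))%N ->
  exists p, exists2 q, s = p ++ q & (n <= 3 * size (flat p) <= 2 * n)%N.
Proof.
elim/last_ind: s => [|s c IH] Hs Hn.
  by exists [::]; exists [::] => //=; move: Hn; rewrite /= muln0 leqn0 => /eqP ->.
have Hsc : forall c', List.In c' s -> (3 * size (leaves c') < n)%N.
  by move=> c' Hc'; apply: Hs; rewrite -cats1; apply: In_catl.
have Hc : (3 * size (leaves c) < n)%N by apply: Hs; rewrite -cats1; apply: In_catr; left.
have Hsz : size (flat (rcons s c)) = (size (flat s) + size (leaves c))%N.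
  by rewrite -cats1 map_cat flatten_cat size_cat /= cats0.
case: (leqP n (3 * size (flat s))) => H.
  have [p [q -> Hp]] := IH Hsc H.
  by exists p; exists (rcons q c) => //; rewrite rcons_cat.
exists (rcons s c); exists [::]; first by rewrite cats0.
rewrite Hsz; move: Hn; rewrite Hsz => Hn; apply/andP; split => //.
rewrite mulnDr; apply: leq_trans (leq_add (ltnW H) (ltnW Hc)) _; lia.
Qed.

Lemma cutc ts c (S : {set V}) u v : uniq (flat ts) -> List.In c ts -> {subset S <= leaves c} ->
  (u \in S) != (v \in S) -> ~~ ((u \in leaves c) && (v \in leaves c)) ->
  lca_leaves (Node ts) u v = leaves (Node ts).
Proof.
move=> Hu Hc Hsub Hx Hn; apply: L1 => c' Hc'; apply/negP => /andP [Hu' Hv'].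
case Su: (u \in S) Hx => /= Hx.
  have E := D Hu Hc Hc' (Hsub _ Su) Hu'; subst c'.
  by rewrite Hu' Hv' in Hn.
have Sv : v \in S by move: Hx; case: (v \in S).
have E := D Hu Hc Hc' (Hsub _ Sv) Hv'; subst c'.
by rewrite Hu' Hv' in Hn.
Qed.

Lemma key n (x : hctree V) : (2 <= n)%N -> uniq (leaves x) -> (2 * n < 3 * size (leaves x))%N ->
  exists S : {set V}, [/\ {subset S <= leaves x}, (n <= 3 * #|S|)%N, (3 * #|S| <= 2 * n)%N &
   forall u v, u \in leaves x -> v \in leaves x -> (u \in S) != (v \in S) ->
     (n <= 3 * size (lca_leaves x u v))%N].
Proof.
move=> n2; elim/hct_ind: x => [y|ts IH]; first by rewrite /=; lia.
rewrite leaves_node => Hu Hsz.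
have Hall : forall u v, lca_leaves (Node ts) u v = leaves (Node ts) ->
  (n <= 3 * size (lca_leaves (Node ts) u v))%N.
  by move=> u v ->; rewrite leaves_node; apply: (leq_trans _ (ltnW Hsz)); lia.
case Hb: (has (fun c => 2 * n < 3 * size (leaves c))%N ts).
  have [c Hc Hcb] := hasIn Hb.
  have [S [Hsub H1 H2 Hcut]] := IH c Hc (uniq_child Hu Hc) Hcb.
  exists S; split => //.
    by move=> y /Hsub Hy; exact: mem_flat Hc Hy.
  move=> u v Hu1 Hv1 Hx.
  case Hin: ((u \in leaves c) && (v \in leaves c)).
    by case/andP: Hin => Hu2 Hv2; rewrite (L2 Hu Hc Hu2 Hv2); apply: Hcut.
  by apply: Hall; apply: (cutc Hu Hc Hsub Hx); rewrite Hin.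
have Hsmall := hasNIn (negbT Hb).
case Hb1: (has (fun c => n <= 3 * size (leaves c))%N ts).
  have [c Hc Hcb] := hasIn Hb1.
  have Huc := uniq_child Hu Hc.
  exists [set y in leaves c].
  have Hcard : #|[set y in leaves c]| = size (leaves c).
    by rewrite cardsE; apply/card_uniqP.
  rewrite Hcard; split => //.
  - by move=> y; rewrite inE => Hy; exact: mem_flat Hc Hy.
  - by move: (Hsmall c Hc); rewrite -ltnNge ltnS.
  move=> u v Hu1 Hv1 Hx; apply: Hall; apply: (cutc Hu Hc (S := [set y in leaves c])) => //.
    by move=> y; rewrite inE.
  by move: Hx; rewrite !inE; case: (u \in leaves c); case: (v \in leaves c).
have Hsm2 : forall c, List.In c ts -> (3 * size (leaves c) < n)%N.
  by move=> c Hc; move: (hasNIn (negbT Hb1) Hc); rewrite -ltnNge.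
have Hn : (n <= 3 * size (flat ts))%N by apply: (leq_trans _ (ltnW Hsz)); lia.
have [p [q Epq Hp]] := prefix Hsm2 Hn.
have Hu2 := Hu; rewrite Epq map_cat flatten_cat cat_uniq in Hu2.
case/and3P: Hu2 => Hup Hdis _.
exists [set y in flat p].
have Hcard : #|[set y in flat p]| = size (flat p).
  by rewrite cardsE; apply/card_uniqP.
rewrite Hcard; split => //.
- by move=> y; rewrite inE Epq map_cat flatten_cat mem_cat => ->.
- by case/andP: Hp.
- by case/andP: Hp.
move=> u v Hu1 Hv1 Hx; apply: Hall; apply: L1 => c' Hc'; apply/negP => /andP [Hu' Hv'].
rewrite Epq in Hc'; case: (In_cat Hc') => Hc''.
  by move: Hx; rewrite !inE (mem_flat Hc'' Hu') (mem_flat Hc'' Hv').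
have Hnot : forall y, y \in leaves c' -> y \notin flat p.
  move=> y Hy; apply/negP => Hyp; case/hasP: Hdis; exists y => //.
  exact: mem_flat Hc'' Hy.
by move: Hx; rewrite !inE (negbTE (Hnot _ Hu')) (negbTE (Hnot _ Hv')).
Qed.
End Key.

From mathcomp Require Import lra.
Local Open Scope ring_scope.

Lemma div3_le (R : realFieldType) (a b : nat) : (a <= 3 * b)%N -> (a%:R / 3%:R <= b%:R :> R).
Proof. by move=> H; rewrite ler_pdivrMr ?ltr0n // -natrM ler_nat mulnC. Qed.

Lemma le_div3 (R : realFieldType) (a b : nat) : (3 * b <= 2 * a)%N -> (b%:R <= 2%:R * a%:R / 3%:R :> R).
Proof. by move=> H; rewrite ler_pdivlMr ?ltr0n // -!natrM ler_nat mulnC. Qed.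

Theorem lemma5p8 (R : realFieldType) (V : finType) (w : V -> V -> R)
    (w_sym : forall u v, w u v = w v u)
    (w_ge0 : forall u v, 0 <= w u v)
    (n_ge2 : (2 <= #|V|)%N)
    (t : hctree V) (ht : is_hctree t)
    (m : R)
    (m_attained : exists2 S : {set V}, balanced R S & cut_weight w S = m)
    (m_min : forall S : {set V}, balanced R S -> m <= cut_weight w S) :
  hc_cost w t >= (#|V|%:R / 3%:R) * m.
Proof.
case/andP: ht => _ Hp.
have Hun : uniq (leaves t) by rewrite (perm_uniq Hp) enum_uniq.
have Hsz : size (leaves t) = #|V| by rewrite (perm_size Hp) cardT.
have Hmem : forall u, u \in leaves t by move=> u; rewrite (perm_mem Hp) mem_enum.
have [|S [_ H1 H2 Hcut]] := key n_ge2 Hun; first by rewrite Hsz; lia.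
have Hc := cardsC S.
have bal : balanced R S.
  rewrite /balanced; apply/and4P; split.
  - exact: div3_le.
  - exact: le_div3.
  - apply: div3_le; lia.
  - apply: le_div3; lia.
set k : R := #|V|%:R / 3%:R.
have k0 : 0 <= k by rewrite /k divr_ge0 // ler0n.
apply: le_trans (ler_wpM2l k0 (m_min S bal)) _.
pose g u v := if (u \in S) && (v \notin S) then k * w u v else 0.
have E1 : k * cut_weight w S = \sum_u \sum_v g u v.
  rewrite /cut_weight mulr_sumr [RHS](bigID (fun u => u \in S)) /=.
  rewrite [X in _ = _ + X]big1 ?addr0; last first.
    by move=> u /negbTE uS; apply: big1 => v _; rewrite /g uS.
  apply: eq_bigr => u uS; rewrite mulr_sumr [RHS](bigID (fun v => v \in S)) /=.
  rewrite [X in _ = X + _]big1 ?add0r; last by move=> v vS; rewrite /g uS vS.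
  by apply: eq_big => v; [rewrite inE | rewrite inE /g uS => ->].
have E2 : \sum_u \sum_v g v u = \sum_u \sum_v g u v by rewrite exchange_big.
have Hle : \sum_u \sum_v g u v + \sum_u \sum_v g v u <=
   \sum_(u : V) \sum_(v : V | u != v) w u v * (size (lca_leaves t u v))%:R.
  rewrite -big_split; apply: ler_sum => u _; rewrite -big_split /= [X in _ <= X]big_mkcond.
  apply: ler_sum => v _ /=; rewrite /g.
  have Hk : forall a b, (a \in S) != (b \in S) -> k <= (size (lca_leaves t a b))%:R.
    by move=> a b Hab; apply: div3_le; apply: Hcut.
  case uS: (u \in S); case vS: (v \in S) => /=.
  - by rewrite addr0; case: ifP => // _; apply: mulr_ge0.
  - have uv : u != v by apply/eqP => E; subst; rewrite uS in vS.
    rewrite uv addr0 mulrC; apply: ler_wpM2l => //; apply: Hk; by rewrite uS vS.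
  - have uv : u != v by apply/eqP => E; subst; rewrite uS in vS.
    rewrite uv add0r w_sym mulrC; apply: ler_wpM2l => //; apply: Hk; by rewrite uS vS.
  - by rewrite addr0; case: ifP => // _; apply: mulr_ge0.
rewrite E1 /hc_cost; rewrite E2 in Hle; lra.
Qed.
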